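(* Let $d\ge2$ and $\mathcal{X}\in\mathbb{R}^{n_1\times\cdots\times n_d}$. Writing $\inf$ for the infimum over all $k\in\mathbb{N}$ and all vectors $x_i^{(j)}\in\mathbb{R}^{n_j}$ ($i\in[k],j\in[d]$) with $\mathcal{X}=\sum_{i=1}^k x_i^{(1)}\circ\cdots\circ x_i^{(d)}$, we have (1) $\|\mathcal{X}\|_*=\inf \frac1d\sum_{i=1}^k\sum_{j=1}^d\|x_i^{(j)}\|^d$; (2) $\|\mathcal{X}\|_{S_{2/d}}^{2/d}=\inf \frac1d\sum_{i=1}^k\sum_{j=1}^d\|x_i^{(j)}\|^2$; (3) $\|\mathcal{X}\|_{S_{1/d}}^{1/d}=\inf \frac1d\sum_{i=1}^k\sum_{j=1}^d\|x_i^{(j)}\|$.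
   Context: $\circ$ denotes the outer product of vectors and $\|\cdot\|$ the Euclidean norm. For a tensor $\mathcal{X}\in\mathbb{R}^{n_1\times\cdots\times n_d}$ and $0<p\le1$, the tensor Schatten-$p$ (quasi-)norm is $$\|\mathcal{X}\|_{S_p}=\inf\Big\{\Big(\sum_{i=1}^r|s_i|^p\Big)^{1/p}: r\in\mathbb{N},\ s_i\in\mathbb{R},\ \mathcal{X}=\sum_{i=1}^r s_i\,u_i^{(1)}\circ\cdots\circ u_i^{(d)},\ u_i^{(j)}\in\mathbb{R}^{n_j},\ \|u_i^{(j)}\|=1\Big\}.$$ For $p=1$ this is the tensor nuclear norm $\|\mathcal{X}\|_*$. *)

(* Defs.v *)
From HB Require Import structures.
From mathcomp Require Import all_boot all_order all_algebra.
From mathcomp Require Import all_classical all_reals all_analysis.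
Set Implicit Arguments. Unset Strict Implicit. Unset Printing Implicit Defensive.
Import Order.TTheory GRing.Theory Num.Theory.
Local Open Scope ring_scope.
Local Open Scope classical_set_scope.

Definition mindex (d : nat) (n : 'I_d -> nat) := forall j : 'I_d, 'I_(n j).

Definition tensor (R : realType) (d : nat) (n : 'I_d -> nat) := mindex n -> R.

Definition vnorm (R : realType) (m : nat) (v : 'rV[R]_m) : R :=
  Num.sqrt (\sum_(k < m) v 0 k ^+ 2).

Definition outer (R : realType) (d : nat) (n : 'I_d -> nat)
  (u : forall j : 'I_d, 'rV[R]_(n j)) : tensor R n :=
  fun idx => \prod_(j < d) u j 0 (idx j).

Definition is_sdecomp (R : realType) (d : nat) (n : 'I_d -> nat)
  (X : tensor R n) (r : nat) (s : 'I_r -> R)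
  (u : 'I_r -> forall j : 'I_d, 'rV[R]_(n j)) : Prop :=
  forall idx, X idx = \sum_(i < r) s i * outer (u i) idx.

Definition is_decomp (R : realType) (d : nat) (n : 'I_d -> nat)
  (X : tensor R n) (k : nat)
  (x : 'I_k -> forall j : 'I_d, 'rV[R]_(n j)) : Prop :=
  forall idx, X idx = \sum_(i < k) outer (x i) idx.

Definition schatten (R : realType) (d : nat) (n : 'I_d -> nat)
  (p : R) (X : tensor R n) : R :=
  inf [set t : R | exists (r : nat) (s : 'I_r -> R)
                          (u : 'I_r -> forall j : 'I_d, 'rV[R]_(n j)),
         (forall i j, vnorm (u i j) = 1) /\ is_sdecomp X s u /\
         t = (\sum_(i < r) `|s i| `^ p) `^ p^-1].

Definition nuclear (R : realType) (d : nat) (n : 'I_d -> nat)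
  (X : tensor R n) : R := schatten 1 X.

Definition decomp_inf (R : realType) (d : nat) (n : 'I_d -> nat)
  (f : R -> R) (X : tensor R n) : R :=
  inf [set t : R | exists (k : nat)
                          (x : 'I_k -> forall j : 'I_d, 'rV[R]_(n j)),
         is_decomp X x /\
         t = d%:R^-1 * \sum_(i < k) \sum_(j < d) f (vnorm (x i j))].

(* Main.v *)
Require Import Defs.
From HB Require Import structures.
From mathcomp Require Import all_boot all_order all_algebra.
From mathcomp Require Import all_classical all_reals all_analysis.
Import Order.TTheory GRing.Theory Num.Theory.
Local Open Scope ring_scope.
Local Open Scope classical_set_scope.

Section Aux.
Variable R : realType.

Lemma inf_ge0 {A : set R} : (forall a, A a -> 0 <= a) -> 0 <= inf A.
Proof.
move=> hA; case: (pselect (A !=set0)) => [neA|eA].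
  by apply: lb_le_inf.
have -> : A = set0 by apply/seteqP; split => x // Ax; exfalso; apply: eA; exists x.
by rewrite inf0.
Qed.

Lemma inf_le_elt {A : set R} {a} : (forall a, A a -> 0 <= a) -> A a -> inf A <= a.
Proof. move=> hA Aa; apply: ge_inf => //; exists 0 => y; exact: hA. Qed.

Lemma key_sets (A B : set R) (p : R) : 0 < p ->
  (forall a, A a -> 0 <= a) -> (forall b, B b -> 0 <= b) ->
  (forall b, B b -> exists2 a, A a & a `^ p <= b) ->
  (forall a, A a -> B (a `^ p)) ->
  inf A `^ p = inf B.
Proof.
move=> p0 hA hB h1 h2.
have p0' : p != 0 by rewrite gt_eqF.
case: (pselect (A !=set0)) => [neA|eA]; last first.
  have eB : B = set0.
    apply/seteqP; split => x // Bx; exfalso; apply: eA.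
    by case: (h1 _ Bx) => a Aa _; exists a.
  have -> : A = set0 by apply/seteqP; split => x // Ax; exfalso; apply: eA; exists x.
  by rewrite eB inf0 powR0.
have neB : B !=set0 by case: neA => a Aa; exists (a `^ p); apply: h2.
have iA0 := inf_ge0 hA; have iB0 := inf_ge0 hB.
apply/le_anti/andP; split.
  apply: lb_le_inf => // b Bb; case: (h1 _ Bb) => a Aa hab.
  apply: le_trans hab; apply: ge0_ler_powR; rewrite ?nnegrE ?(ltW p0) //.
    exact: hA.
  by have := inf_le_elt hA Aa.
have h3 : inf B `^ p^-1 <= inf A.
  apply: lb_le_inf => // a' Aa.
  have hm : inf B <= a' `^ p by apply: (inf_le_elt hB); exact: h2.
  apply: (@le_trans _ _ ((a' `^ p) `^ p^-1)).
    by apply: ge0_ler_powR; rewrite ?nnegrE ?invr_ge0 ?(ltW p0) ?powR_ge0.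
  by rewrite -powRrM divff // powRr1 // hA.
apply: (@le_trans _ _ ((inf B `^ p^-1) `^ p)).
  by rewrite -powRrM mulVf // powRr1.
by apply: ge0_ler_powR; rewrite ?nnegrE ?(ltW p0) ?powR_ge0.
Qed.

Lemma vnorm_ge0 m (v : 'rV[R]_m) : 0 <= vnorm v.
Proof. exact: sqrtr_ge0. Qed.

Lemma vnormZ m (a : R) (v : 'rV[R]_m) : vnorm (a *: v) = `|a| * vnorm v.
Proof.
rewrite /vnorm; under eq_bigr do rewrite mxE exprMn.
by rewrite -mulr_sumr sqrtrM ?sqr_ge0 // sqrtr_sqr.
Qed.

Lemma vnorm_eq0 m (v : 'rV[R]_m) : vnorm v = 0 -> v = 0.
Proof.
move=> /eqP; rewrite /vnorm sqrtr_eq0 => hle.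
have hs : \sum_(k < m) v 0 k ^+ 2 = 0.
  by apply/le_anti; rewrite hle sumr_ge0 // => k _; apply: sqr_ge0.
have := psumr_eq0P (fun k _ => sqr_ge0 (v 0 k)) hs => h.
apply/matrixP => i j; rewrite (ord1 i) mxE.
by apply/eqP; rewrite -sqrf_eq0 h.
Qed.

Lemma unit_vec m : (0 < m)%N -> {e : 'rV[R]_m | vnorm e = 1}.
Proof.
move=> hm; exists (\row_k (if k == Ordinal hm then 1 else 0)).
rewrite /vnorm (bigD1 (Ordinal hm)) //= big1 ?mxE ?eqxx ?expr1n ?addr0 ?sqrtr1 //.
by move=> k hk; rewrite mxE (negbTE hk) expr0n.
Qed.

Lemma amgm d (a : 'I_d.+1 -> R) (q : nat) : (forall j, 0 <= a j) ->
  (\prod_j a j) `^ (q%:R / d.+1%:R) <= d.+1%:R^-1 * \sum_j a j ^+ q.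
Proof.
move=> ha.
have hb : {in predT, forall j, 0 <= a j ^+ q} by move=> j _; apply: exprn_ge0.
have := (leif_AGM hb).1; rewrite cardT size_enum_ord => H.
set M := _ / _ in H.
have hM : 0 <= M.
  by rewrite /M divr_ge0 // sumr_ge0 // => j _; apply: exprn_ge0.
have H' : \prod_j a j ^+ q <= M ^+ d.+1 by exact: H.
rewrite powRrM powR_mulrn ?prodr_ge0 // -prodrXl.
apply: (@le_trans _ _ ((M ^+ d.+1) `^ d.+1%:R^-1)).
  by apply: ge0_ler_powR; rewrite ?nnegrE ?invr_ge0 ?prodr_ge0 ?exprn_ge0.
rewrite -powR_mulrn // -powRrM divff ?powRr1 //.
by rewrite /M mulrC.
Qed.

End Aux.

Section Main.
Variables (R : realType) (d : nat) (n : 'I_d.+1 -> nat) (X : tensor R n).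

Lemma key (q : nat) (f : R -> R) (p : R) : (0 < q)%N ->
  (forall t, 0 <= t -> f t = t ^+ q) -> p = q%:R / d.+1%:R ->
  schatten p X `^ p = decomp_inf f X.
Proof.
move=> hq hf hp.
have p0 : 0 < p by rewrite hp divr_gt0 // ltr0n.
have p0' : p != 0 by rewrite gt_eqF.
have dinv0 : d.+1%:R^-1 != 0 :> R by rewrite invr_eq0 pnatr_eq0.
rewrite /schatten /decomp_inf; apply: key_sets => //.
- by move=> a [r [s [u [_ [_ ->]]]]]; apply: powR_ge0.
- move=> b [k [x [_ ->]]]; rewrite mulr_ge0 ?invr_ge0 // sumr_ge0 // => i _.
  by rewrite sumr_ge0 // => j _; rewrite hf ?vnorm_ge0 // exprn_ge0 ?vnorm_ge0.
- move=> b [k [x [hx ->]]].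
  have hb0 : 0 <= d.+1%:R^-1 * \sum_(i < k) \sum_(j < d.+1) f (vnorm (x i j)).
    rewrite mulr_ge0 ?invr_ge0 // sumr_ge0 // => i _.
    by rewrite sumr_ge0 // => j _; rewrite hf ?vnorm_ge0 // exprn_ge0 ?vnorm_ge0.
  case: (pselect (forall j, (0 < n j)%N)) => [hn|hn]; last first.
    have [j0 hj0] : exists j, n j = 0%N.
      apply: contra_notP hn => H j; rewrite lt0n; apply/eqP => h; apply: H.
      by exists j.
    exists 0; last by rewrite powR0.
    exists 0%N, (fun _ => 0), (fun _ _ => 0); split; first by case.
    split; last by rewrite big_ord0 powR0 // invr_eq0.
    by move=> idx; have := ltn_ord (idx j0); rewrite [X in (_ < X)%N]hj0.
  pose e j := sval (@unit_vec R _ (hn j)).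
  pose u i j := if vnorm (x i j) == 0 then e j else (vnorm (x i j))^-1 *: x i j.
  pose s i := \prod_j vnorm (x i j).
  have hxu i j : vnorm (x i j) *: u i j = x i j.
    rewrite /u; case: eqP => h; first by rewrite h scale0r (@vnorm_eq0 R _ _ h).
    by rewrite scalerA divff ?scale1r //; apply/eqP.
  exists ((\sum_(i < k) `|s i| `^ p) `^ p^-1).
    exists k, s, u; split.
      move=> i j; rewrite /u; case: eqP => h; first exact: (svalP (@unit_vec R _ (hn j))).
      rewrite vnormZ ger0_norm ?invr_ge0 ?vnorm_ge0 // mulVf //; exact/eqP.
    split=> // idx; rewrite hx; apply: eq_bigr => i _.
    rewrite /outer /s -big_split /=; apply: eq_bigr => j _.
    by rewrite -[in LHS](hxu i j) mxE.
  have hs0 : 0 <= \sum_(i < k) `|s i| `^ p by apply: sumr_ge0 => i _; exact: powR_ge0.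
  rewrite -powRrM mulVf ?powRr1 //.
  rewrite mulr_sumr; apply: ler_sum => i _.
  have hsi : 0 <= s i by apply: prodr_ge0 => j _; exact: vnorm_ge0.
  rewrite ger0_norm //.
  rewrite hp; under eq_bigr do rewrite hf ?vnorm_ge0 //.
  by apply: amgm => j; apply: vnorm_ge0.
- move=> a [r [s [u [hu [hs ->]]]]].
  pose c i := `|s i| `^ d.+1%:R^-1.
  pose lam i (j : 'I_d.+1) := if j == ord0 then Num.sg (s i) * c i else c i.
  exists r, (fun i j => lam i j *: u i j); split.
    move=> idx; rewrite hs; apply: eq_bigr => i _.
    rewrite /outer /=; under [in RHS]eq_bigr do rewrite mxE.
    rewrite big_split /=; congr (_ * _); symmetry.
    rewrite big_ord_recl /lam eqxx.
    have hl j : (lift ord0 j == ord0 :> 'I_d.+1) = false.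
      by rewrite eq_sym (negbTE (neq_lift _ _)).
    rewrite (eq_bigr (fun _ => c i)); last by move=> j _.
    rewrite prodr_const card_ord -mulrA -exprS.
    rewrite /c -powR_mulrn ?powR_ge0 // -powRrM mulVf ?pnatr_eq0 //.
    by rewrite powRr1 ?normr_ge0 // -numEsg.
  have hs0 : 0 <= \sum_(i < r) `|s i| `^ p by apply: sumr_ge0 => i _; exact: powR_ge0.
  rewrite -powRrM mulVf ?powRr1 //.
  have hv i j : vnorm (lam i j *: u i j) = c i.
    rewrite vnormZ hu mulr1 /lam; case: ifP => _; last by rewrite ger0_norm ?powR_ge0.
    rewrite normrM normr_sg ger0_norm ?powR_ge0 //.
    case: eqP => [h|_] /=; last by rewrite mul1r.
    by rewrite /c h normr0 powR0 // mul0r.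
  rewrite [in RHS](eq_bigr (fun i => (c i ^+ q) *+ d.+1)); last first.
    move=> i _; under eq_bigr do rewrite hv hf ?powR_ge0 //.
    by rewrite sumr_const card_ord.
  rewrite mulr_sumr; apply: eq_bigr => i _.
  rewrite -[c i ^+ q *+ d.+1]mulr_natl mulrA mulVf ?pnatr_eq0 // mul1r.
  by rewrite /c -powR_mulrn ?powR_ge0 // -powRrM hp mulrC.
Qed.
End Main.

Lemma schatten_ge0 (R : realType) (d : nat) (n : 'I_d -> nat) (X : tensor R n) p :
  0 <= schatten p X.
Proof. by apply: inf_ge0 => a [r [s [u [_ [_ ->]]]]]; apply: powR_ge0. Qed.

Theorem corollary1 (R : realType) (d : nat) (n : 'I_d -> nat)
  (X : tensor R n) (hd : (2 <= d)%N) :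
  [/\ nuclear X = decomp_inf (fun t : R => t ^+ d) X,
      schatten (2 / d%:R) X `^ (2 / d%:R) = decomp_inf (fun t : R => t ^+ 2) X
    & schatten (1 / d%:R) X `^ (1 / d%:R) = decomp_inf (fun t : R => t) X].
Proof.
case: d n X hd => [|d] n X hd //; split.
- rewrite /nuclear -[schatten 1 X]powRr1 ?schatten_ge0 //.
  apply: (@key R d n X d.+1) => //.
  by rewrite divff // pnatr_eq0.
- exact: (@key R d n X 2).
- by apply: (@key R d n X 1).
Qed.
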